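(* Let $f_i$ and $f_j$ be Poisson finite set densities on finite subsets of $\mathbb{R}^d$ with parameters (expected numbers of objects) $\lambda_i,\lambda_j>0$ and localisation densities $\rho_i,\rho_j$ on $\mathbb{R}^d$, and let $\omega\in[0,1]$. Let $z_\omega=\int_{\mathbb{R}^d}\rho_i^{(1-\omega)}(x)\rho_j^{\omega}(x)\,\mathrm{d}x$ and let $\lambda_\omega=\lambda_i^{(1-\omega)}\lambda_j^{\omega}z_\omega$ be the expected number of objects of their exponential mixture density with weight $\omega$. Then $$\lambda_\omega<\min\{\lambda_i,\lambda_j\}$$ holds whenever $$z_\omega<\frac{\min\{\lambda_i,\lambda_j\}}{\max\{\lambda_i,\lambda_j\}}.$$
   Context: A Poisson finite set density with parameter $\lambda>0$ and localisation (probability) density $\rho$ on $\mathbb{R}^d$ has Poisson cardinality distribution with mean $\lambda$ and, given cardinality $n$, localisation density $\rho_n(x_1,\ldots,x_n)=\prod_{k=1}^n\rho(x_k)$. The exponential mixture density with weight $\omega$ is $f_\omega\propto f_i^{1-\omega}f_j^{\omega}$, normalised with respect to the set integral; it is Poisson with parameter $\lambda_\omega$ as in the claim. *)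

(* Defs.v *)
From HB Require Import structures.
From mathcomp Require Import all_boot all_order all_algebra.
From mathcomp Require Import all_classical all_reals all_analysis.
Set Implicit Arguments. Unset Strict Implicit. Unset Printing Implicit Defensive.
Import Order.TTheory GRing.Theory Num.Theory.
Local Open Scope ring_scope.
Local Open Scope ereal_scope.

(* Points of R^d are represented by d.-tuple R, which carries the product
   (= Borel) sigma-algebra of the library.  The Lebesgue integral over R^d of a
   nonnegative measurable function is the d-fold iterated integral w.r.t. the
   one-dimensional Lebesgue measure (Tonelli). *)
Fixpoint lebesgue_int_Rd (R : realType) (d : nat) :
    (d.-tuple R -> \bar R) -> \bar R :=
  match d return (d.-tuple R -> \bar R) -> \bar R with
  | 0 => fun f => f [tuple]
  | n.+1 => fun f =>
      \int[@lebesgue_measure R]_(x in [set: R])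
         lebesgue_int_Rd (fun t : n.-tuple R => f [tuple of x :: t])
  end.

Definition is_density (R : realType) (d : nat) (rho : d.-tuple R -> R) : Prop :=
  [/\ measurable_fun [set: d.-tuple R] rho,
      (forall x, (0 <= rho x)%R) &
      lebesgue_int_Rd (fun x => (rho x)%:E) = 1].

Definition z_omega (R : realType) (d : nat) (rho_i rho_j : d.-tuple R -> R)
    (omega : R) : \bar R :=
  lebesgue_int_Rd (fun x => (powR (rho_i x) (1 - omega) * powR (rho_j x) omega)%:E).

Definition lambda_omega (R : realType) (d : nat) (lam_i lam_j : R)
    (rho_i rho_j : d.-tuple R -> R) (omega : R) : \bar R :=
  (powR lam_i (1 - omega) * powR lam_j omega)%:E * z_omega rho_i rho_j omega.

(* Main.v *)
Require Import Defs.
From HB Require Import structures.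
From mathcomp Require Import all_boot all_order all_algebra.
From mathcomp Require Import all_classical all_reals all_analysis.
Import Order.TTheory GRing.Theory Num.Theory.
Local Open Scope ring_scope.
Local Open Scope ereal_scope.

Theorem proposition2 (R : realType) (d : nat) (lam_i lam_j : R)
    (rho_i rho_j : d.-tuple R -> R) (omega : R) :
  (0 < lam_i)%R -> (0 < lam_j)%R ->
  is_density rho_i -> is_density rho_j ->
  (0 <= omega <= 1)%R ->
  z_omega rho_i rho_j omega < (Num.min lam_i lam_j / Num.max lam_i lam_j)%:E ->
  lambda_omega lam_i lam_j rho_i rho_j omega < (Num.min lam_i lam_j)%:E.
Proof.
move=> li lj _ _ /andP[w0 w1] hz.
rewrite /lambda_omega.
set M := Num.max lam_i lam_j. set m := Num.min lam_i lam_j.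
have M0 : (0 < M)%R by rewrite lt_max li.
have m0 : (0 < m)%R by rewrite lt_min li lj.
set c := (powR lam_i (1 - omega) * powR lam_j omega)%R.
have c0 : (0 < c)%R by rewrite mulr_gt0 // powR_gt0.
have cM : (c <= M)%R.
  have -> : M = (powR M (1 - omega) * powR M omega)%R.
    rewrite -powRD; first by rewrite subrK powRr1 // ltW.
    by rewrite (gt_eqF M0) implybT.
  rewrite /c ler_pM ?powR_ge0 //.
    apply: ge0_ler_powR; rewrite ?subr_ge0 // ?nnegrE; try exact: ltW.
    by rewrite /M le_max lexx.
  apply: ge0_ler_powR; rewrite ?nnegrE //; try exact: ltW.
  by rewrite /M le_max lexx orbT.
move: hz; case: (z_omega rho_i rho_j omega) => [r| |] //=.
- rewrite lte_fin -EFinM lte_fin => hr.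
  have [r0|r0] := leP r 0%R.
    by apply: (le_lt_trans _ m0); rewrite mulr_ge0_le0 // ltW.
  apply: (le_lt_trans (y := (M * r)%R)); first by rewrite ler_wpM2r // ltW.
  by rewrite mulrC -ltr_pdivlMr.
- by move=> _; rewrite mulrNy gtr0_sg // mul1e ltNyr.
Qed.
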